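(* Let $a,b\ge0$, $c>0$ with $b<c^2+ac$ and $d:=a^2/4+b>0$, and let $y$ be the solution of the scalar initial value problem $y'=y^2+ay-b$, $y(T)=c$. Then for $t\in(-\infty,T]$, $$y(t)\ge\frac{1}{T-t+\frac{1}{c+a/2}}-\frac{a}{2}.$$ *)

(* Defs.v *)
From Stdlib Require Export Reals.
Open Scope R_scope.

(* Main.v *)
Require Import Defs.
From Stdlib Require Import Reals.
Open Scope R_scope.
From Coquelicot Require Import Coquelicot.
From Stdlib Require Import Lra.

Theorem corollaryA2 (a b c T : R) (y : R -> R)
  (ha : 0 <= a) (hb : 0 <= b) (hc : 0 < c)
  (hbc : b < c ^ 2 + a * c)
  (hd : 0 < a ^ 2 / 4 + b)
  (hy' : forall t, t <= T -> derivable_pt_lim y t ((y t) ^ 2 + a * y t - b))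
  (hyT : y T = c) :
  forall t, t <= T ->
    y t >= 1 / (T - t + 1 / (c + a / 2)) - a / 2.
Proof.
  intros t Ht.
  set (z0 := c + a / 2).
  assert (hz0 : 0 < z0) by (unfold z0; lra).
  set (k := 1 / z0).
  assert (hk : 0 < k) by (unfold k; apply Rdiv_lt_0_compat; lra).
  destruct Ht as [Hlt | Heq].
  2:{ subst t. rewrite hyT. fold z0. fold k. unfold k.
      replace (T - T + 1 / z0) with (1 / z0) by ring.
      unfold z0. apply Req_ge. field. lra. }
  set (w := fun x => / (T - x + k)).
  assert (Hpos : forall x, x <= T -> T - x + k > 0) by (intros; lra).
  assert (Hcy : forall x, x <= T -> continuity_pt y x).
  { intros x Hx. apply derivable_continuous_pt. exists ((y x) ^ 2 + a * y x - b).
    apply hy'; exact Hx. }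
  assert (Hdw : forall x, x <= T -> is_derive w x (w x ^ 2)).
  { intros x Hx. unfold w. auto_derive.
    - specialize (Hpos x Hx). lra.
    - specialize (Hpos x Hx). field. lra. }
  set (f := fun x => y x + a / 2 + w x).
  assert (Cf : forall x, t <= x <= T -> continuity_pt f x).
  { intros x Hx. unfold f. apply continuity_pt_plus.
    - apply continuity_pt_plus. apply Hcy; lra. apply continuity_pt_const.
      intros u v; reflexivity.
    - apply derivable_continuous_pt. exists (w x ^ 2).
      apply is_derive_Reals. apply Hdw; lra. }
  assert (h : t <= T) by lra.
  set (P := primitive h (FTC_P1 h Cf)).
  assert (HP : forall x, t <= x <= T -> is_derive P x (f x)).
  { intros x Hx. apply is_derive_Reals. apply RiemannInt_P28. exact Hx. }
  set (d := a ^ 2 / 4 + b).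
  set (psi := fun x => (y x + a / 2 - w x) * exp (- P x)).
  assert (Hpsi : forall x, t <= x <= T -> derivable_pt_lim psi x (- d * exp (- P x))).
  { intros x Hx. apply is_derive_Reals.
    assert (Dy : is_derive y x ((y x) ^ 2 + a * y x - b)).
    { apply is_derive_Reals. apply hy'. lra. }
    assert (Dw := Hdw x (proj2 Hx)).
    assert (DP := HP x Hx).
    unfold psi, w. auto_derive.
    - repeat split.
      + exists ((y x) ^ 2 + a * y x - b); exact Dy.
      + specialize (Hpos x (proj2 Hx)). lra.
      + exists (f x); exact DP.
    - replace (Derive (fun x0 : R => y x0) x) with ((y x) ^ 2 + a * y x - b) by (symmetry; apply is_derive_unique; exact Dy).
      replace (Derive (fun x0 : R => P x0) x) with (f x) by (symmetry; apply is_derive_unique; exact DP).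
      unfold f, w, d. specialize (Hpos x (proj2 Hx)).
      field. lra. }
  destruct (MVT_cor2 psi (fun x => - d * exp (- P x)) t T Hlt Hpsi) as [m [Hm Hmr]].
  assert (HpsiT : psi T = 0).
  { unfold psi, w. rewrite hyT.
    replace (T - T + k) with k by ring. unfold k, z0.
    replace (c + a / 2 - / (1 / (c + a / 2))) with 0 by (field; lra). ring. }
  assert (Hneg : - d * exp (- P m) * (T - t) < 0).
  { assert (0 < exp (- P m)) by apply exp_pos.
    assert (0 < d) by (unfold d; lra).
    assert (0 < d * exp (- P m) * (T - t)).
    { apply Rmult_lt_0_compat; [apply Rmult_lt_0_compat|]; lra. }
    lra. }
  assert (Hpsit : psi t > 0) by lra.
  unfold psi in Hpsit.
  assert (He : 0 < exp (- P t)) by apply exp_pos.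
  assert (Hphi : y t + a / 2 - w t > 0).
  { destruct (Rlt_le_dec 0 (y t + a / 2 - w t)) as [H|H]; [lra|].
    assert ((y t + a / 2 - w t) * exp (- P t) <= 0).
    { apply Rmult_le_0_r; lra. }
    lra. }
  unfold w in Hphi. fold k. unfold Rdiv. rewrite Rmult_1_l. lra.
Qed.
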